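(* Let $q=2$. Under $G_2$ there are exactly $4$ plane orbits and $4$ point orbits, namely: planes: $\mathcal N_1=\{\Gamma\text{-planes}\}\cup\{\overline{1_{\mathscr C}}\text{-planes}\}$ of size $3+3=6$; $\mathcal N_2=\{2_{\mathscr C}\text{-planes}\}$ of size $6$; $\mathcal N_3=\{3_{\mathscr C}\text{-planes}\}$ of size $1$; $\mathcal N_4=\{0_{\mathscr C}\text{-planes}\}$ of size $2$; points: $\mathcal M_1=\{\mathscr C\text{-points}\}$ of size $3$; $\mathcal M_2=\{\text{T-points}\}\cup\{0_\Gamma\text{-points}\}$ of size $6+2=8$; $\mathcal M_3=\{3_\Gamma\text{-points}\}$ of size $1$; $\mathcal M_4=\{1_\Gamma\text{-points}\}$ of size $3$.
   Context: Notation. $\mathbb F_q$ is the field with $q$ elements, $\mathbb F_q^+=\mathbb F_q\cup\{\infty\}$. Points of $\mathrm{PG}(3,q)$ are written $\mathbf P(x_0,x_1,x_2,x_3)$ with $x$ a nonzero row vector up to scalars; $\boldsymbol\pi(c_0,c_1,c_2,c_3)$ is the plane $c_0x_0+c_1x_1+c_2x_2+c_3x_3=0$. Put $P(t)=\mathbf P(t^3,t^2,t,1)$ for $t\in\mathbb F_q$, $P(\infty)=\mathbf P(1,0,0,0)$, and $\mathscr C=\{P(t):t\in\mathbb F_q^+\}$ (the twisted cubic). The osculating planes are $\pi_{\rm osc}(t)=\boldsymbol\pi(1,-3t,3t^2,-t^3)$ ($t\in\mathbb F_q$) and $\pi_{\rm osc}(\infty)=\boldsymbol\pi(0,0,0,1)$;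 these $q+1$ planes are called $\Gamma$-planes. The tangent at $P(t)$, $t\in\mathbb F_q$, is the line through $P(t)$ and $\mathbf P(3t^2,2t,1,0)$; the tangent at $P(\infty)$ is the line through $\mathbf P(1,0,0,0)$ and $\mathbf P(0,1,0,0)$. $G_q$ is the group of all projectivities of $\mathrm{PG}(3,q)$ mapping $\mathscr C$ onto itself. Plane types: $\Gamma$-plane = osculating plane; $\overline{1_{\mathscr C}}$-plane = non-osculating plane meeting $\mathscr C$ in exactly one point; $d_{\mathscr C}$-plane ($d\in\{0,2,3\}$) = plane meeting $\mathscr C$ in exactly $d$ points. Point types (for $q\not\equiv0\pmod 3$): $\mathscr C$-point = point of $\mathscr C$; T-point = point off $\mathscr C$ on some tangent; for $\mu\in\{0,1,3\}$, $\mu_\Gamma$-point = point off $\mathscr C$, on no tangent, lying on exactly $\mu$ $\Gamma$-planes. *)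

(* Defs.v *)
(* Twisted cubic in PG(3,q); points and planes of PG(3,q)
   are represented by nonzero row vectors of 'rV[F]_4 (points: coordinates,
   planes: coefficient vectors c, plane c = { x | sum_i c_i x_i = 0 }).
   Projective equality is equality of row spaces, (u == v)%MS. *)
From HB Require Import structures.
From mathcomp Require Import all_boot all_order all_algebra.
Set Implicit Arguments. Unset Strict Implicit. Unset Printing Implicit Defensive.
Import Order.TTheory GRing.Theory Num.Theory.
Local Open Scope ring_scope.

Section TwistedCubic.
Variable F : finFieldType.

Definition row4 (a b c d : F) : 'rV[F]_4 := \row_(i < 4) nth 0 [:: a; b; c; d] i.

(* P(t), t in F_q^+ = option F (None = infinity) *)
Definition Pt (t : option F) : 'rV[F]_4 :=
  if t is Some s then row4 (s ^+ 3) (s ^+ 2) s 1 else row4 1 0 0 0.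

Definition osc (t : option F) : 'rV[F]_4 :=
  if t is Some s then row4 1 (- (3%:R * s)) (3%:R * s ^+ 2) (- s ^+ 3)
  else row4 0 0 0 1.

(* second point spanning the tangent line at P(t) *)
Definition tdir (t : option F) : 'rV[F]_4 :=
  if t is Some s then row4 (3%:R * s ^+ 2) (2%:R * s) 1 0 else row4 0 1 0 0.

Definition incident (x c : 'rV[F]_4) : bool := x *m c^T == 0.

Definition onC (x : 'rV[F]_4) : bool := [exists t, (x == Pt t)%MS].

Definition on_tangent (x : 'rV[F]_4) (t : option F) : bool :=
  (x <= col_mx (Pt t) (tdir t))%MS.

Definition nGamma (x : 'rV[F]_4) : nat := #|[set t | incident x (osc t)]|.

Definition Cpoint (x : 'rV[F]_4) : bool := onC x.
Definition Tpoint (x : 'rV[F]_4) : bool :=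
  ~~ onC x && [exists t, on_tangent x t].
Definition muGpoint (mu : nat) (x : 'rV[F]_4) : bool :=
  [&& ~~ onC x, ~~ [exists t, on_tangent x t] & nGamma x == mu].

Definition nC (c : 'rV[F]_4) : nat := #|[set t | incident (Pt t) c]|.

Definition Gplane (c : 'rV[F]_4) : bool := [exists t, (c == osc t)%MS].
Definition onebar_plane (c : 'rV[F]_4) : bool := ~~ Gplane c && (nC c == 1%N).
Definition dC_plane (d : nat) (c : 'rV[F]_4) : bool := nC c == d.

Definition inG (A : 'M[F]_4) : bool :=
  [&& A \in unitmx,
      [forall t, [exists t', (Pt t *m A == Pt t')%MS]] &
      [forall t', [exists t, (Pt t *m A == Pt t')%MS]]].

(* nonzero vectors; for F = F_2 these are exactly the points (planes) of PG(3,2) *)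
Definition nzvec : {set 'rV[F]_4} := [set x | x != 0].

(* orbits of G_q (as sets of representing vectors; faithful for q = 2) *)
Definition pt_orbit (x : 'rV[F]_4) : {set 'rV[F]_4} :=
  [set y | (y != 0) && [exists A, inG A && (x *m A == y)%MS]].
Definition pl_orbit (c : 'rV[F]_4) : {set 'rV[F]_4} :=
  [set c' | (c' != 0) &&
     [exists A, inG A && [forall x, incident x c == incident (x *m A) c']]].

Definition N1 : {set 'rV[F]_4} := [set c in nzvec | Gplane c || onebar_plane c].
Definition N2 : {set 'rV[F]_4} := [set c in nzvec | dC_plane 2 c].
Definition N3 : {set 'rV[F]_4} := [set c in nzvec | dC_plane 3 c].
Definition N4 : {set 'rV[F]_4} := [set c in nzvec | dC_plane 0 c].
Definition M1 : {set 'rV[F]_4} := [set x in nzvec | Cpoint x].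
Definition M2 : {set 'rV[F]_4} := [set x in nzvec | Tpoint x || muGpoint 0 x].
Definition M3 : {set 'rV[F]_4} := [set x in nzvec | muGpoint 3 x].
Definition M4 : {set 'rV[F]_4} := [set x in nzvec | muGpoint 1 x].

End TwistedCubic.

(* Main.v *)
Require Import Defs.
From HB Require Import structures.
From mathcomp Require Import all_boot all_order all_algebra.
Set Implicit Arguments. Unset Strict Implicit. Unset Printing Implicit Defensive.
Import GRing.Theory.
Local Open Scope ring_scope.

Notation F2 := ('F_2 : finFieldType).

Lemma F2E (a : 'F_2) : a = (a != 0)%:R.
Proof. by case: a => [[|[|n]] H] //; apply/val_inj. Qed.

Lemma F2cases (a : 'F_2) : a = 0 \/ a = 1.
Proof. by rewrite (F2E a); case: (a != 0); [right|left]. Qed.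

Definition V := (bool * bool * bool * bool)%type.
Definition comp (v : V) (i : nat) : bool :=
  let: (a, b, c, d) := v in nth false [:: a; b; c; d] i.
Definition vec (v : V) : 'rV['F_2]_4 := \row_(i < 4) ((comp v i)%:R : 'F_2).
Definition i0 : 'I_4 := @Ordinal 4 0 isT.
Definition i1 : 'I_4 := @Ordinal 4 1 isT.
Definition i2 : 'I_4 := @Ordinal 4 2 isT.
Definition i3 : 'I_4 := @Ordinal 4 3 isT.
Definition code (x : 'rV['F_2]_4) : V :=
  (x 0 i0 != 0, x 0 i1 != 0, x 0 i2 != 0, x 0 i3 != 0).

Lemma vec_code x : vec (code x) = x.
Proof.
apply/rowP => j; rewrite mxE (F2E (x 0 j)).
case: j => [[|[|[|[|j]]]] Hj] //=.
- by rewrite (bool_irrelevance Hj (isT : 0 < 4)%N).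
- by rewrite (bool_irrelevance Hj (isT : 1 < 4)%N).
- by rewrite (bool_irrelevance Hj (isT : 2 < 4)%N).
- by rewrite (bool_irrelevance Hj (isT : 3 < 4)%N).
Qed.

Lemma code_vec v : code (vec v) = v.
Proof. by case: v => [[[[] []] []] []]; rewrite /code !mxE. Qed.

Lemma vec_inj : injective vec.
Proof. by move=> v w H; rewrite -(code_vec v) H code_vec. Qed.

Lemma eqmxF2 n (x y : 'rV['F_2]_n) : (x == y)%MS = (x == y).
Proof.
apply/idP/eqP => [|->]; last by rewrite !submx_refl.
case/andP => /sub_rVP [a ->] /sub_rVP [b Hy].
move: Hy; case: (F2cases a) => ->; last by rewrite scale1r.
by rewrite !scale0r scaler0 => ->.
Qed.

Lemma natbD (a b : bool) : ((a%:R : 'F_2) + b%:R) = (a (+) b)%:R.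
Proof. by case: a; case: b => //; apply/val_inj. Qed.
Lemma natbM (a b : bool) : ((a%:R : 'F_2) * b%:R) = (a && b)%:R.
Proof. by case: a; case: b => //; apply/val_inj. Qed.
Lemma natb0 : ((false%:R : 'F_2)) = 0. Proof. by []. Qed.
Lemma natb_eq0 (a : bool) : ((a%:R : 'F_2) == 0) = ~~ a.
Proof. by case: a. Qed.

Definition mkV (f : nat -> bool) : V := (f 0%N, f 1%N, f 2%N, f 3%N).
Definition xorV (v w : V) : V := mkV (fun i => comp v i (+) comp w i).
Definition dotb (v w : V) : bool :=
  (comp v 0 && comp w 0) (+) ((comp v 1 && comp w 1) (+) ((comp v 2 && comp w 2)
     (+) (comp v 3 && comp w 3))).

Lemma vec_add v w : vec v + vec w = vec (xorV v w).
Proof. by apply/rowP => j; rewrite !mxE natbD; case: j => [[|[|[|[|]]]] ?]. Qed.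

Lemma incident_vec v w : incident (vec v) (vec w) = ~~ dotb v w.
Proof.
rewrite /incident.
have -> : (vec v *m (vec w)^T == 0) = ((vec v *m (vec w)^T) 0 0 == 0).
  apply/eqP/eqP => [->|H]; first by rewrite mxE.
  by apply/matrixP => i j; rewrite !ord1 H mxE.
rewrite mxE !big_ord_recl big_ord0 !mxE /= !natbM addr0 !natbD natb_eq0.
by [].
Qed.

Definition M := (V * V * V * V)%type.
Definition rowsel (m : M) (i : nat) : V :=
  let: (a, b, c, d) := m in nth a [:: a; b; c; d] i.
Definition matof (m : M) : 'M['F_2]_4 :=
  \matrix_(i < 4, j < 4) ((comp (rowsel m i) j)%:R : 'F_2).
Definition codeM (A : 'M['F_2]_4) : M :=
  (code (row i0 A), code (row i1 A), code (row i2 A), code (row i3 A)).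

Lemma comp_code (x : 'rV['F_2]_4) (j : 'I_4) : ((comp (code x) j)%:R : 'F_2) = x 0 j.
Proof. by rewrite -{2}(vec_code x) mxE. Qed.

Lemma matof_codeM A : matof (codeM A) = A.
Proof.
apply/matrixP => i j; rewrite mxE.
case: i => [[|[|[|[|i]]]] Hi] //=; rewrite comp_code mxE; congr (A _ j); exact/val_inj.
Qed.

Definition xorv (v w : V) : V :=
  let: (a, b, c, d) := v in let: (a', b', c', d') := w in
  (a (+) a', b (+) b', c (+) c', d (+) d').
Definition sc (b : bool) (v : V) : V :=
  if b then v else (false, false, false, false).
Definition mulb (v : V) (m : M) : V :=
  let: (a, b, c, d) := v in let: (r0, r1, r2, r3) := m in
  xorv (sc a r0) (xorv (sc b r1) (xorv (sc c r2) (sc d r3))).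

Lemma mul_vec v m : vec v *m matof m = vec (mulb v m).
Proof.
apply/rowP => j; rewrite !mxE !big_ord_recl big_ord0 !mxE /= !natbM addr0 !natbD.
case: v => [[[a b] c] d]; case: m => [[[r0 r1] r2] r3].
case: r0 => [[[? ?] ?] ?]; case: r1 => [[[? ?] ?] ?]; case: r2 => [[[? ?] ?] ?];
case: r3 => [[[? ?] ?] ?].
by case: a; case: b; case: c; case: d; case: j => [[|[|[|[|]]]] ?].
Qed.

Lemma forall_enum (T : finType) (s : seq T) (P : pred T) :
  (forall x, x \in s) -> [forall x, P x] = all P s.
Proof. by move=> Hs; apply/forallP/allP => H x //; apply: H. Qed.
Lemma exists_enum (T : finType) (s : seq T) (P : pred T) :
  (forall x, x \in s) -> [exists x, P x] = has P s.
Proof. by move=> Hs; apply/existsP/hasP => [[x Hx]|[x _ Hx]]; exists x. Qed.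
Lemma card_enum (T : finType) (s : seq T) (P : pred T) :
  uniq s -> (forall x, x \in s) -> #|[set x | P x]| = count P s.
Proof.
move=> Hu Hs; rewrite -size_filter -(card_uniqP (filter_uniq P Hu)).
by apply: eq_card => x; rewrite inE mem_filter Hs andbT.
Qed.

Definition allV : seq V :=
  [seq (p, d) | p <- [seq (q, c) | q <- [seq (a, b) | a <- [:: true; false],
     b <- [:: true; false]], c <- [:: true; false]], d <- [:: true; false]].
Lemma mem_allV v : v \in allV.
Proof. by case: v => [[[[] []] []] []]. Qed.
Lemma uniq_allV : uniq allV. Proof. by []. Qed.

Definition sV := map vec allV.
Lemma mem_sV x : x \in sV.
Proof. by rewrite -(vec_code x); apply: map_f; apply: mem_allV. Qed.
Lemma uniq_sV : uniq sV.
Proof. by rewrite map_inj_uniq ?uniq_allV //; apply: vec_inj. Qed.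

Definition allM : seq M :=
  [seq (p, d) | p <- [seq (q, c) | q <- [seq (a, b) | a <- allV, b <- allV], c <- allV],
                d <- allV].
Lemma mem_allM m : m \in allM.
Proof.
case: m => [[[a b] c] d].
by apply: allpairs_f; [apply: allpairs_f; [apply: allpairs_f|]|]; apply: mem_allV.
Qed.
Definition sM := map matof allM.
Lemma mem_sM A : A \in sM.
Proof. by rewrite -(matof_codeM A); apply: map_f; apply: mem_allM. Qed.

Definition optS : seq (option 'F_2) := [:: None; Some 0; Some 1].
Lemma mem_optS t : t \in optS.
Proof. by case: t => [s|] //; case: (F2cases s) => ->. Qed.
Lemma uniq_optS : uniq optS. Proof. by vm_compute. Qed.

Definition ptb (t : option 'F_2) : V :=
  if t is Some s then (if s == 0 then (false, false, false, true) else (true, true, true, true))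
  else (true, false, false, false).
Definition oscb (t : option 'F_2) : V :=
  if t is Some s then (if s == 0 then (true, false, false, false) else (true, true, true, true))
  else (false, false, false, true).
Definition tdb (t : option 'F_2) : V :=
  if t is Some s then (if s == 0 then (false, false, true, false) else (true, false, true, false))
  else (false, true, false, false).

Ltac vals t := case: t => [[[|[|?]] ?]|] //;
  rewrite /Pt /osc /tdir /row4 /vec; apply/rowP; case => [[|[|[|[|]]]] ?]; rewrite ?mxE //=; apply/eqP; vm_compute.

Lemma Pt_vec t : Pt t = vec (ptb t). Proof. by vals t. Qed.
Lemma osc_vec t : osc t = vec (oscb t). Proof. by vals t. Qed.
Lemma tdir_vec t : tdir t = vec (tdb t). Proof. by vals t. Qed.

Definition zV : V := (false, false, false, false).
Lemma vec0 : vec zV = 0. Proof. by apply/rowP => j; rewrite !mxE; case: j => [[|[|[|[|]]]] ?]. Qed.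
Lemma vec_eq v w : (vec v == vec w) = (v == w). Proof. exact: (inj_eq vec_inj). Qed.
Lemma vec_eq0 v : (vec v == 0) = (v == zV). Proof. by rewrite -vec0 vec_eq. Qed.

Lemma unitmxF2 (A : 'M['F_2]_4) :
  (A \in unitmx) = [forall x : 'rV_4, (x *m A == 0) ==> (x == 0)].
Proof.
apply/idP/forallP => [HA x|H].
  by apply/implyP => /eqP Hx; rewrite -(mulmxK HA x) Hx mul0mx.
rewrite -row_free_unit -kermx_eq0; apply/negPn/negP => Hk.
have [i Hi] : exists i, row i (kermx A) != 0.
  apply/existsP; move: Hk; apply: contraR; rewrite negb_exists => /forallP Hr.
  by apply/eqP/row_matrixP => i; rewrite row0; apply/eqP; move: (Hr i); rewrite negbK.
have := H (row i (kermx A)); rewrite (negbTE Hi) implybF.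
by rewrite -sub_kermx row_sub.
Qed.

Lemma span2 n (x a b : 'rV['F_2]_n) :
  (x <= col_mx a b)%MS = [|| x == 0, x == a, x == b | x == a + b].
Proof.
apply/idP/idP.
  case/submxP => D ->; rewrite -[D]hsubmxK mul_row_col.
  rewrite [lsubmx D]mx11_scalar [rsubmx D]mx11_scalar !mul_scalar_mx.
  case: (F2cases (lsubmx D 0 0)) => ->; case: (F2cases (rsubmx D 0 0)) => ->;
  by rewrite ?scale0r ?scale1r ?addr0 ?add0r eqxx ?orbT.
case/or4P => /eqP ->; first exact: sub0mx.
- by rewrite -addsmxE addsmxSl.
- by rewrite -addsmxE addsmxSr.
- by rewrite -addsmxE addmx_sub_adds.
Qed.

Lemma eqmx_vec v w : (vec v == vec w)%MS = (v == w).
Proof. by rewrite eqmxF2 vec_eq. Qed.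

Definition onCb (v : V) : bool := has (fun t => v == ptb t) optS.
Lemma onC_vec v : onC (vec v) = onCb v.
Proof.
rewrite /onC (exists_enum _ mem_optS); apply: eq_has => t.
by rewrite Pt_vec eqmx_vec.
Qed.

Definition tanb (v : V) t : bool :=
  [|| v == zV, v == ptb t, v == tdb t | v == xorV (ptb t) (tdb t)].
Lemma tan_vec v t : on_tangent (vec v) t = tanb v t.
Proof. by rewrite /on_tangent span2 Pt_vec tdir_vec vec_add -vec0 !vec_eq. Qed.

Definition nGb (v : V) : nat := count (fun t => ~~ dotb v (oscb t)) optS.
Lemma nGamma_vec v : nGamma (vec v) = nGb v.
Proof.
rewrite /nGamma (card_enum _ uniq_optS mem_optS); apply: eq_count => t.
by rewrite osc_vec incident_vec.
Qed.

Definition nCb (c : V) : nat := count (fun t => ~~ dotb (ptb t) c) optS.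
Lemma nC_vec c : nC (vec c) = nCb c.
Proof.
rewrite /nC (card_enum _ uniq_optS mem_optS); apply: eq_count => t.
by rewrite Pt_vec incident_vec.
Qed.

Definition Gb (c : V) : bool := has (fun t => c == oscb t) optS.
Lemma Gplane_vec c : Gplane (vec c) = Gb c.
Proof.
rewrite /Gplane (exists_enum _ mem_optS); apply: eq_has => t.
by rewrite osc_vec eqmx_vec.
Qed.

Definition Tb (v : V) : bool := ~~ onCb v && has (tanb v) optS.
Lemma Tpoint_vec v : Tpoint (vec v) = Tb v.
Proof.
rewrite /Tpoint onC_vec (exists_enum _ mem_optS); congr (_ && _).
by apply: eq_has => t; rewrite tan_vec.
Qed.

Definition mub (mu : nat) (v : V) : bool :=
  [&& ~~ onCb v, ~~ has (tanb v) optS & nGb v == mu].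
Lemma mu_vec mu v : muGpoint mu (vec v) = mub mu v.
Proof.
rewrite /muGpoint onC_vec (exists_enum _ mem_optS) nGamma_vec; congr [&& _, ~~ _ & _].
by apply: eq_has => t; rewrite tan_vec.
Qed.

Definition onebarb (c : V) : bool := ~~ Gb c && (nCb c == 1%N).
Lemma onebar_vec c : onebar_plane (vec c) = onebarb c.
Proof. by rewrite /onebar_plane Gplane_vec nC_vec. Qed.
Lemma dC_vec d c : dC_plane d (vec c) = (nCb c == d).
Proof. by rewrite /dC_plane nC_vec. Qed.

Lemma nzvec_vec v : (vec v \in nzvec 'F_2) = (v != zV).
Proof. by rewrite inE vec_eq0. Qed.

Definition ptsL : seq V :=
  [:: (true, false, false, false); (false, false, false, true); (true, true, true, true)].
Lemma ptsL_E : map ptb optS = ptsL. Proof. by vm_compute. Qed.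
Definition inGb0 (m : M) : bool :=
  [&& all (fun v => (mulb v m == zV) ==> (v == zV)) allV,
      all (fun p => has (fun p' => mulb p m == p') ptsL) ptsL &
      all (fun p' => has (fun p => mulb p m == p') ptsL) ptsL].
Definition inGb (m : M) : bool :=
  [&& all (fun p => has (fun p' => mulb p m == p') ptsL) ptsL,
      all (fun p' => has (fun p => mulb p m == p') ptsL) ptsL &
      all (fun v => (mulb v m == zV) ==> (v == zV)) allV].
Lemma inGb0E m : inGb0 m = inGb m.
Proof. by rewrite /inGb0 /inGb andbC -andbA. Qed.
Lemma allhas_map (T : Type) (f : T -> V) (s : seq T) (R : V -> V -> bool) :
  all (fun p => has (fun p' => R p p') (map f s)) (map f s) =
  all (fun t => has (fun t' => R (f t) (f t')) s) s.
Proof. by rewrite all_map; apply: eq_all => t /=; rewrite has_map. Qed.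
Lemma allhas_map2 (T : Type) (f : T -> V) (s : seq T) (R : V -> V -> bool) :
  all (fun p' => has (fun p => R p p') (map f s)) (map f s) =
  all (fun t' => has (fun t => R (f t) (f t')) s) s.
Proof. by rewrite all_map; apply: eq_all => t /=; rewrite has_map. Qed.
Lemma inG_matof m : inG (matof m) = inGb m.
Proof.
rewrite -inGb0E /inG unitmxF2 (forall_enum _ mem_sV) all_map.
rewrite !(forall_enum _ mem_optS).
congr [&& _, _ & _].
- by apply: eq_all => v /=; rewrite mul_vec !vec_eq0.
- rewrite -ptsL_E allhas_map; apply: eq_all => t; rewrite (exists_enum _ mem_optS).
  by apply: eq_has => t'; rewrite !Pt_vec mul_vec eqmx_vec.
- rewrite -ptsL_E allhas_map2; apply: eq_all => t'; rewrite (exists_enum _ mem_optS).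
  by apply: eq_has => t; rewrite !Pt_vec mul_vec eqmx_vec.
Qed.

Definition Glist := filter inGb allM.
Lemma has_filter_and (T : eqType) (a b : pred T) s :
  has (fun x => a x && b x) s = has b (filter a s).
Proof. by elim: s => //= x s IH; case: (a x) => /=; rewrite IH. Qed.

Lemma mem_mapM (s : seq M) : (forall m, m \in s) -> forall A, A \in map matof s.
Proof. by move=> Hs A; rewrite -(matof_codeM A); apply: map_f. Qed.

Definition ptorb (G : seq M) (v w : V) : bool :=
  (w != zV) && has (fun m => mulb v m == w) G.
Lemma ptorb_gen (s : seq M) (Hs : forall m, m \in s) v w :
  (vec w \in pt_orbit (vec v)) = ptorb (filter inGb s) v w.
Proof.
rewrite inE vec_eq0; congr (_ && _).
rewrite (exists_enum _ (mem_mapM Hs)) has_map -has_filter_and.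
by apply: eq_has => m /=; rewrite inG_matof mul_vec eqmx_vec. 
Qed.

Definition plorb (G : seq M) (c c' : V) : bool :=
  (c' != zV) && has (fun m => all (fun x => (~~ dotb x c) == ~~ dotb (mulb x m) c') allV) G.
Lemma plorb_gen (s : seq M) (Hs : forall m, m \in s) c c' :
  (vec c' \in pl_orbit (vec c)) = plorb (filter inGb s) c c'.
Proof.
rewrite inE vec_eq0; congr (_ && _).
rewrite (exists_enum _ (mem_mapM Hs)) has_map -has_filter_and.
apply: eq_has => m; rewrite [LHS]/= inG_matof; congr (_ && _).
rewrite (forall_enum _ mem_sV) all_map; apply: eq_all => x /=.
by rewrite mul_vec !incident_vec.
Qed.


Definition Glit : seq M := [:: (true, true, true, true, (true, true, false, true), (true, false, true, true), (true, false, false, false)); (true, true, true, true, (true, true, false, true), (true, false, true, true), (false, false, false, true)); (true, true, true, true, (true, true, false, false), (true, false, true, false), (true, false, false, false)); (true, true, true, true, (true, true, false, false), (true, false, true, false), (false, false, false, true)); (true, true, true, true, (true, false, true, true), (true, true, false, true), (true, false, false, false)); (true, true, true, true, (true, false, true, true), (true, true, false, true), (false, false, false, true)); (true, true, true, true, (true, false, true, false), (true, true, false, false), (true, false, false, false)); (true, true, true, true, (true, false, true, false), (true, true, false, false), (false, false, false, true)); (true, true, true, true, (false, true, false, true), (false, false, true, true), (true, false, false, false)); (true, true, true, true, (false, true, false, true), (false, false, true, true), (false, false, false, true)); (true, true, true, true, (false, true, false, false), (false, false, true, false), (true, false, false, false)); (true, true, true, true, (false, true, false, false), (false, false, true, false),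 (false, false, false, true)); (true, true, true, true, (false, false, true, true), (false, true, false, true), (true, false, false, false)); (true, true, true, true, (false, false, true, true), (false, true, false, true), (false, false, false, true)); (true, true, true, true, (false, false, true, false), (false, true, false, false), (true, false, false, false)); (true, true, true, true, (false, false, true, false), (false, true, false, false), (false, false, false, true)); (true, false, false, false, (true, true, false, true), (true, false, true, true), (true, true, true, true));           (true, false, false, false, (true, true, false, true), (true, false, true, true), (false, false, false, true)); (true, false, false, false, (true, true, false, false), (true, false, true, false), (true, true, true, true)); (true, false, false, false, (true, true, false, false), (true, false, true, false), (false, false, false, true)); (true, false, false, false, (true, false, true, true), (true, true, false, true), (true, true, true, true)); (true, false, false, false, (true, false, true, true), (true, true, false, true), (false, false, false, true)); (true, false, false, false, (true, false, true, false), (true, true, false, false), (true, true, true, true)); (true, false, false, false, (true, false, true, false), (true, true, false, false), (false, false, false, true)); (true, false, false, false, (false, true, false, true), (false, false, true, true), (true, true, true, true)); (true, false, false, false, (false, true, false, true), (false, false, true, true), (false, false, false, true)); (true, false, false, false, (false, true, false, false), (false, false, true, false), (true, true, true, true)); (true, false, false, false, (false, true, false, false), (false, false, true, false), (false, false, false, true)); (true, false, false, false, (false, false, true, true), (false, true, false, true), (true, true, true, true)); (true, false, false, false, (false, false, true, true), (false, true, false, true), (false, false, false, true)); (true, false, false, false, (false, false, true, false), (false, true, false, false), (true, true, true, true)); (true, false, false, false, (false, false, true, false), (false, true, false, false), (false, false, false, true)); (false, false, false, true, (true, true, false, true), (true, false, true, true), (true, true, true, true)); (false, false, false, true, (true,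 true, false, true), (true, false, true, true), (true, false, false, false));           (false, false, false, true, (true, true, false, false), (true, false, true, false), (true, true, true, true)); (false, false, false, true, (true, true, false, false), (true, false, true, false), (true, false, false, false)); (false, false, false, true, (true, false, true, true), (true, true, false, true), (true, true, true, true)); (false, false, false, true, (true, false, true, true), (true, true, false, true), (true, false, false, false)); (false, false, false, true, (true, false, true, false), (true, true, false, false), (true, true, true, true)); (false, false, false, true, (true, false, true, false), (true, true, false, false), (true, false, false, false)); (false, false, false, true, (false, true, false, true), (false, false, true, true), (true, true, true, true)); (false, false, false, true, (false, true, false, true), (false, false, true, true), (true, false, false, false)); (false, false, false, true, (false, true, false, false), (false, false, true, false), (true, true, true, true)); (false, false, false, true, (false, true, false, false), (false, false, true, false), (true, false, false, false)); (false, false, false, true, (false, false, true, true), (false, true, false, true), (true, true, true, true)); (false, false, false, true, (false, false, true, true), (false, true, false, true), (true, false, false, false)); (false, false, false, true, (false, false, true, false), (false, true, false, false), (true, true, true, true)); (false, false, false, true, (false, false, true, false), (false, true, false, false), (true, false, false, false))].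
Lemma Glist_Eb : filter inGb allM == Glit. Proof. vm_compute. reflexivity. Qed.
Lemma Glist_E : filter inGb allM = Glit. Proof. exact/eqP/Glist_Eb. Qed.

Definition SetOf (p : pred V) : {set 'rV['F_2]_4} := [set x | p (code x)].
Lemma SetOfE (S : {set 'rV['F_2]_4}) p : (forall v, (vec v \in S) = p v) -> S = SetOf p.
Proof. by move=> H; apply/setP => x; rewrite inE -{1}(vec_code x) H. Qed.
Lemma card_SetOf p : #|SetOf p| = count p allV.
Proof.
rewrite /SetOf (card_enum _ uniq_sV mem_sV) count_map.
by apply: eq_count => v /=; rewrite code_vec.
Qed.
Definition eqf (p q : pred V) : bool := all (fun w => p w == q w) allV.
Lemma SetOf_eqf p q : eqf p q -> SetOf p = SetOf q.
Proof. by move/allP => H; apply/setP => x; rewrite !inE; apply/eqP/H/mem_allV. Qed.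
Lemma SetOf_neq p q : ~~ eqf p q -> SetOf p != SetOf q.
Proof.
apply: contra => /eqP E; apply/allP => w _.
by have := congr1 (fun S : {set 'rV['F_2]_4} => vec w \in S) E; rewrite /= !inE code_vec => ->.
Qed.

Lemma orbits4 (f : 'rV['F_2]_4 -> {set 'rV['F_2]_4}) (orb : V -> pred V)
    (p1 p2 p3 p4 : pred V) :
  (forall v, f (vec v) = SetOf (orb v)) ->
  all (fun v => (v != zV) ==>
     [|| eqf (orb v) p1, eqf (orb v) p2, eqf (orb v) p3 | eqf (orb v) p4]) allV ->
  has (fun v => (v != zV) && eqf (orb v) p1) allV ->
  has (fun v => (v != zV) && eqf (orb v) p2) allV ->
  has (fun v => (v != zV) && eqf (orb v) p3) allV ->
  has (fun v => (v != zV) && eqf (orb v) p4) allV ->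
  [set f x | x in nzvec 'F_2] = [set SetOf p1; SetOf p2; SetOf p3; SetOf p4].
Proof.
move=> Hf Hall H1 H2 H3 H4; apply/setP => S; rewrite !inE.
apply/imsetP/idP => [[x Hx ->]|].
  rewrite -(vec_code x) Hf.
  have := allP Hall (code x) (mem_allV _).
  rewrite -nzvec_vec vec_code Hx /=.
  by case/or4P => /SetOf_eqf ->; rewrite eqxx ?orbT.
have ex p : has (fun v => (v != zV) && eqf (orb v) p) allV ->
    exists2 x, x \in nzvec 'F_2 & SetOf p = f x.
  case/hasP => v _ /andP [nz e]; exists (vec v); first by rewrite nzvec_vec.
  by rewrite Hf (SetOf_eqf e).
by rewrite -!orbA; case/or4P => /eqP ->; apply: ex.
Qed.

Lemma card4 (p1 p2 p3 p4 : pred V) :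
  ~~ eqf p1 p2 -> ~~ eqf p1 p3 -> ~~ eqf p1 p4 -> ~~ eqf p2 p3 -> ~~ eqf p2 p4 ->
  ~~ eqf p3 p4 -> #|[set SetOf p1; SetOf p2; SetOf p3; SetOf p4]| = 4.
Proof.
move=> /SetOf_neq h12 /SetOf_neq h13 /SetOf_neq h14 /SetOf_neq h23 /SetOf_neq h24
  /SetOf_neq h34.
have -> : [set SetOf p1; SetOf p2; SetOf p3; SetOf p4] =
          [set S in [:: SetOf p1; SetOf p2; SetOf p3; SetOf p4]].
  by apply/setP => S; rewrite !inE -!orbA.
rewrite cardsE; apply/card_uniqP.
by rewrite /= !inE !negb_or h12 h13 h14 h23 h24 h34.
Qed.

Definition n1b c := (c != zV) && (Gb c || onebarb c).
Definition n2b c := (c != zV) && (nCb c == 2).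
Definition n3b c := (c != zV) && (nCb c == 3).
Definition n4b c := (c != zV) && (nCb c == 0).
Definition m1b x := (x != zV) && onCb x.
Definition m2b x := (x != zV) && (Tb x || mub 0 x).
Definition m3b x := (x != zV) && mub 3 x.
Definition m4b x := (x != zV) && mub 1 x.

Lemma N1E : N1 'F_2 = SetOf n1b.
Proof. by apply: SetOfE => c; rewrite !inE vec_eq0 Gplane_vec onebar_vec. Qed.
Lemma N2E : N2 'F_2 = SetOf n2b.
Proof. by apply: SetOfE => c; rewrite !inE vec_eq0 dC_vec. Qed.
Lemma N3E : N3 'F_2 = SetOf n3b.
Proof. by apply: SetOfE => c; rewrite !inE vec_eq0 dC_vec. Qed.
Lemma N4E : N4 'F_2 = SetOf n4b.
Proof. by apply: SetOfE => c; rewrite !inE vec_eq0 dC_vec. Qed.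
Lemma M1E : M1 'F_2 = SetOf m1b.
Proof. by apply: SetOfE => c; rewrite !inE vec_eq0 /Cpoint onC_vec. Qed.
Lemma M2E : M2 'F_2 = SetOf m2b.
Proof. by apply: SetOfE => c; rewrite !inE vec_eq0 Tpoint_vec mu_vec. Qed.
Lemma M3E : M3 'F_2 = SetOf m3b.
Proof. by apply: SetOfE => c; rewrite !inE vec_eq0 mu_vec. Qed.
Lemma M4E : M4 'F_2 = SetOf m4b.
Proof. by apply: SetOfE => c; rewrite !inE vec_eq0 mu_vec. Qed.
Lemma GpE : [set c in nzvec 'F_2 | Gplane c] = SetOf (fun c => (c != zV) && Gb c).
Proof. by apply: SetOfE => c; rewrite !inE vec_eq0 Gplane_vec. Qed.
Lemma obE : [set c in nzvec 'F_2 | onebar_plane c] = SetOf (fun c => (c != zV) && onebarb c).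
Proof. by apply: SetOfE => c; rewrite !inE vec_eq0 onebar_vec. Qed.
Lemma TpE : [set c in nzvec 'F_2 | Tpoint c] = SetOf (fun c => (c != zV) && Tb c).
Proof. by apply: SetOfE => c; rewrite !inE vec_eq0 Tpoint_vec. Qed.
Lemma m0E : [set c in nzvec 'F_2 | muGpoint 0 c] = SetOf (fun c => (c != zV) && mub 0 c).
Proof. by apply: SetOfE => c; rewrite !inE vec_eq0 mu_vec. Qed.

Lemma ptE v : pt_orbit (vec v) = SetOf (ptorb Glit v).
Proof. by apply: SetOfE => w; rewrite (ptorb_gen mem_allM) Glist_E. Qed.
Lemma plE v : pl_orbit (vec v) = SetOf (plorb Glit v).
Proof. by apply: SetOfE => w; rewrite (plorb_gen mem_allM) Glist_E. Qed.

Lemma PO : [set pl_orbit c | c in nzvec 'F_2] = [set N1 'F_2; N2 'F_2; N3 'F_2; N4 'F_2].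
Proof.
rewrite N1E N2E N3E N4E; apply: orbits4; first exact: plE.
all: by vm_compute.
Qed.
Lemma QO : [set pt_orbit c | c in nzvec 'F_2] = [set M1 'F_2; M2 'F_2; M3 'F_2; M4 'F_2].
Proof.
rewrite M1E M2E M3E M4E; apply: orbits4; first exact: ptE.
all: by vm_compute.
Qed.

Theorem theorem4p2 :
  (* plane orbits *)
  [set pl_orbit c | c in nzvec 'F_2] =
    [set N1 'F_2; N2 'F_2; N3 'F_2; N4 'F_2] /\
  #|[set pl_orbit c | c in nzvec 'F_2]| = 4%N /\
  #|[set c in nzvec 'F_2 | Gplane c]| = 3%N /\
  #|[set c in nzvec 'F_2 | onebar_plane c]| = 3%N /\
  #|N1 'F_2| = 6%N /\ #|N2 'F_2| = 6%N /\ #|N3 'F_2| = 1%N /\ #|N4 'F_2| = 2%N /\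
  (* point orbits *)
  [set pt_orbit x | x in nzvec 'F_2] =
    [set M1 'F_2; M2 'F_2; M3 'F_2; M4 'F_2] /\
  #|[set pt_orbit x | x in nzvec 'F_2]| = 4%N /\
  #|[set x in nzvec 'F_2 | Tpoint x]| = 6%N /\
  #|[set x in nzvec 'F_2 | muGpoint 0 x]| = 2%N /\
  #|M1 'F_2| = 3%N /\ #|M2 'F_2| = 8%N /\ #|M3 'F_2| = 1%N /\ #|M4 'F_2| = 3%N.
Proof.
split; first exact: PO.
split; first by rewrite PO N1E N2E N3E N4E; apply: card4; vm_compute.
split; first by rewrite GpE card_SetOf; vm_compute.
split; first by rewrite obE card_SetOf; vm_compute.
split; first by rewrite N1E card_SetOf; vm_compute.
split; first by rewrite N2E card_SetOf; vm_compute.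
split; first by rewrite N3E card_SetOf; vm_compute.
split; first by rewrite N4E card_SetOf; vm_compute.
split; first exact: QO.
split; first by rewrite QO M1E M2E M3E M4E; apply: card4; vm_compute.
split; first by rewrite TpE card_SetOf; vm_compute.
split; first by rewrite m0E card_SetOf; vm_compute.
split; first by rewrite M1E card_SetOf; vm_compute.
split; first by rewrite M2E card_SetOf; vm_compute.
split; first by rewrite M3E card_SetOf; vm_compute.
by rewrite M4E card_SetOf; vm_compute.
Qed.
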